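(* Let $4/3\le p\le\sqrt2$, and put $$u=\frac{6p^2}{4-p^2},\quad v=2,\quad a=\frac{3p^3}{4-p^2},\quad b=\frac{5p}{2},\quad c=\frac p2.$$ Define $F(z)=|u+vz|-|a+bz-cz^2|$. Then $F(z)\le F(-|z|)$ for all $z$ with $|z|\le1$. *)

(* Defs.v *)
(* complex numbers as an arbitrary numClosedFieldType C
   (algebraically closed field with conjugation, norm `|.|, e.g. the complex numbers). *)
From HB Require Import structures.
From mathcomp Require Import all_boot all_order all_algebra.
Set Implicit Arguments. Unset Strict Implicit. Unset Printing Implicit Defensive.
Import Order.TTheory GRing.Theory Num.Theory.
Local Open Scope ring_scope.

Section Lemma8Defs.
Variable C : numClosedFieldType.

Definition u8 (p : C) : C := 6 * p ^+ 2 / (4 - p ^+ 2).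
Definition v8 : C := 2.
Definition a8 (p : C) : C := 3 * p ^+ 3 / (4 - p ^+ 2).
Definition b8 (p : C) : C := 5 * p / 2.
Definition c8 (p : C) : C := p / 2.

Definition F8 (p z : C) : C :=
  `|u8 p + v8 * z| - `|a8 p + b8 p * z - c8 p * z ^+ 2|.
End Lemma8Defs.

(* Main.v *)
Require Import Defs.
From HB Require Import structures.
From mathcomp Require Import all_boot all_order all_algebra.
From mathcomp Require Import ring lra.
Import Order.TTheory GRing.Theory Num.Theory.
Local Open Scope ring_scope.

Section RS.
Variable C : numClosedFieldType.
Record RC := MkRC { rcval : C; rcP : rcval \is Num.real }.
HB.instance Definition _ := [isSub for rcval].
HB.instance Definition _ := [Choice of RC by <:].
HB.instance Definition _ := [SubChoice_isSubIntegralDomain of RC by <:].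
HB.instance Definition _ := [SubIntegralDomain_isSubField of RC by <:].

Definition rle (x y : RC) := rcval x <= rcval y.
Definition rlt (x y : RC) := rcval x < rcval y.
Lemma rnormP (x : RC) : `|rcval x| \is Num.real. Proof. exact: normr_real. Qed.
Definition rnorm (x : RC) : RC := @MkRC _ (rnormP x).

Lemma rle0_add (x y : RC) : rle 0 x -> rle 0 y -> rle 0 (x + y).
Proof. rewrite /rle /=. exact: addr_ge0. Qed.
Lemma rle0_mul (x y : RC) : rle 0 x -> rle 0 y -> rle 0 (x * y).
Proof. rewrite /rle /=. exact: mulr_ge0. Qed.
Lemma rle0_anti (x : RC) : rle 0 x -> rle x 0 -> x = 0.
Proof. rewrite /rle /= => h1 h2; apply: val_inj => /=; apply/eqP; by rewrite eq_le h1 h2. Qed.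
Lemma rsub_ge0 (x y : RC) : rle 0 (y - x) = rle x y.
Proof. by rewrite /rle /= subr_ge0. Qed.
Lemma rle0_total (x : RC) : rle 0 x || rle x 0.
Proof. rewrite /rle /=. exact: (rcP x). Qed.
Lemma rnormN (x : RC) : rnorm (- x) = rnorm x.
Proof. apply: val_inj => /=. exact: normrN. Qed.
Lemma rge0_norm (x : RC) : rle 0 x -> rnorm x = x.
Proof. move=> h; apply: val_inj => /=. exact: ger0_norm. Qed.
Lemma rlt_def (x y : RC) : rlt x y = (y != x) && rle x y.
Proof. by rewrite /rlt /rle lt_def. Qed.

HB.instance Definition _ := Num.IntegralDomain_isLeReal.Build RC
  rle0_add rle0_mul rle0_anti rsub_ge0 rle0_total rnormN rge0_norm rlt_def.
End RS.
Arguments rcval {C}.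
Arguments MkRC {C}.
Lemma leRC (C : numClosedFieldType) (a b : RC C) : (a <= b) = (rcval a <= rcval b).
Proof. by []. Qed.
Lemma ltRC (C : numClosedFieldType) (a b : RC C) : (a < b) = (rcval a < rcval b).
Proof. by []. Qed.
Lemma normRC (C : numClosedFieldType) (a : RC C) : rcval `|a| = `|rcval a|.
Proof. by []. Qed.


Lemma c1b (R : realFieldType) (p r u : R) (hp1 : 4/3 <= p) (hp3 : p <= 3/2) (hr0 : 0 <= r) (hr1 : r <= 1) (hu1 : 24/5 <= u) (hu2 : u <= 6) :
  0 <= (u - 2 * r) * (5 * p / 2) * (p * u / 2 - p / 2 * r^+2) + 2 * u * (p * u / 2) - 2 * u * (5 * p / 2) * r - 2 * u * (p / 2) * r^+2.
Proof.
have k1 : 0 <= (u - 2 * r) * (u - r^+2) by apply: mulr_ge0; nra.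
have k2 : 0 <= (p - 4/3) * ((u - 2 * r) * (u - r^+2)) by apply: mulr_ge0; lra.
have r2 : r^+2 <= r by nra.
have r3 : 0 <= r^+3 by apply: exprn_ge0.
have k3a : u * r^+2 <= u * r by nra.
have k3b : 0 <= u * (8 * u - 33) by apply: mulr_ge0; lra.
have k3c : u * r <= u by nra.
have k3 : 0 <= 8 * u^+2 - 8 * u * r^+2 - 25 * u * r + 10 * r^+3 by nra.
have -> : (u - 2 * r) * (5 * p / 2) * (p * u / 2 - p / 2 * r^+2) + 2 * u * (p * u / 2) - 2 * u * (5 * p / 2) * r - 2 * u * (p / 2) * r^+2
  = p * (5/4 * ((p - 4/3) * ((u - 2 * r) * (u - r^+2))) + 1/3 * (8 * u^+2 - 8 * u * r^+2 - 25 * u * r + 10 * r^+3)) by field.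
apply: mulr_ge0; first lra.
lra.
Qed.

Lemma c1a (R : realFieldType) (p r u : R) (hp1 : 4/3 <= p) (hp3 : p <= 3/2) (hr0 : 0 <= r) (hr1 : r <= 1) (hu1 : 24/5 <= u) (hu2 : u <= 6) :
  0 <= (u - 2 * r) * (5 * p / 2) * (p * u / 2 - p / 2 * r^+2) - 2 * u * (p * u / 2 - 5 * p / 2 * r - p / 2 * r^+2).
Proof.
have r2 : r^+2 <= 1 by nra.
have k1 : 0 <= p / 2 * (u - r^+2) by apply: mulr_ge0; lra.
have k2 : 0 <= u * (5 * p / 2 - 2) by apply: mulr_ge0; lra.
have k3 : 0 <= u - p / 2 * (u - r^+2) by nra.
have k4 : 0 <= 5 * p * r by apply: mulr_ge0; lra.
have -> : (u - 2 * r) * (5 * p / 2) * (p * u / 2 - p / 2 * r^+2) - 2 * u * (p * u / 2 - 5 * p / 2 * r - p / 2 * r^+2)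
  = (p / 2 * (u - r^+2)) * (u * (5 * p / 2 - 2)) + (5 * p * r) * (u - p / 2 * (u - r^+2)) by field.
apply: addr_ge0; exact: mulr_ge0.
Qed.

Lemma c2 (R : realFieldType) (p r a : R) (hp1 : 4/3 <= p) (hp3 : p <= 3/2) (hr0 : 0 <= r) (hr1 : r <= 1) (ha1 : 16/5 <= a) (ha2 : a <= 9/2) :
  8 * r + 4 * `|a - 5 * p / 2 * r - p / 2 * r^+2| <= 5 * p * (a - p / 2 * r^+2).
Proof.
have h1 : 0 <= (a - 16/5) * (p - 4/3) by nra.
have h2 : 0 <= r * (p - 4/3) by nra.
have h3 : r^+2 <= 1 by nra.
have h4 : 0 <= r^+2 by nra.
have h5 : 0 <= r^+2 * (3/2 - p) by nra.
have h6 : 0 <= (1 - r^+2) * (p - 4/3) by nra.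
have h7 : 0 <= r * p by nra.
case: (lerP 0 (a - 5 * p / 2 * r - p / 2 * r^+2)) => hE.
  rewrite ger0_norm //; nra.
rewrite ltr0_norm //; nra.
Qed.

Lemma core (R : realFieldType) (p r x u n1 n2 : R)
  (hp1 : 4/3 <= p) (hp2 : p^+2 <= 2) (hr0 : 0 <= r) (hr1 : r <= 1)
  (hx1 : - r <= x) (hx2 : x <= r) (hu : u * (4 - p^+2) = 6 * p^+2)
  (hn1 : 0 <= n1) (en1 : n1^+2 = u^+2 + 4 * u * x + 4 * r^+2)
  (hn2 : 0 <= n2)
  (en2 : n2^+2 = (p * u / 2 + p / 2 * r^+2)^+2 + (5 * p / 2)^+2 * r^+2
         + 2 * (5 * p / 2) * (p * u / 2 - p / 2 * r^+2) * x - 4 * (p * u / 2) * (p / 2) * x^+2) :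
  n1 - n2 <= (u - 2 * r) - `|p * u / 2 - 5 * p / 2 * r - p / 2 * r^+2|.
Proof.
have hp3 : p <= 3/2 by nra.
have hu1 : 24/5 <= u by nra.
have hu2 : u <= 6 by nra.
set a := p * u / 2.
have ha1 : 16/5 <= a by rewrite /a; nra.
have ha2 : a <= 9/2 by rewrite /a; nra.
set E := a - 5 * p / 2 * r - p / 2 * r^+2.
set B0 := `|E|.
set A0 := u - 2 * r.
have hA0 : 0 < A0 by rewrite /A0; lra.
have hB0 : 0 <= B0 by rewrite /B0.
have eB0 : B0^+2 = E^+2 by rewrite /B0 real_normK // num_real.
have hux : 0 <= 4 * u * (x + r) by apply: mulr_ge0; lra.
have hA : A0 <= n1.
  have e1 : n1^+2 - A0^+2 = 4 * u * (x + r) by rewrite en1 /A0; ring.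
  have e2 : A0^+2 <= n1^+2 by lra.
  by rewrite -(@ler_pXn2r _ 2) // ?nnegrE; lra.
have hux2 : 0 <= 4 * u * (r - x) by apply: mulr_ge0; lra.
have hAu : n1 <= u + 2 * r.
  have e1 : (u + 2 * r)^+2 - n1^+2 = 4 * u * (r - x) by rewrite en1; ring.
  have e2 : n1^+2 <= (u + 2 * r)^+2 by lra.
  by rewrite -(@ler_pXn2r _ 2) // ?nnegrE; lra.
set q := 2 * (5 * p / 2) * (a - p / 2 * r^+2) + 4 * a * (p / 2) * (r - x).
have hq : 2 * (5 * p / 2) * (a - p / 2 * r^+2) <= q.
  rewrite /q; have e1 : 0 <= 4 * a * (p / 2) * (r - x) by apply: mulr_ge0; [apply: mulr_ge0|]; lra.
  lra.
have C1 : 0 <= (u - 2 * r) * (5 * p / 2) * (a - p / 2 * r^+2) - 2 * u * B0.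
  rewrite /B0 /E; case: (lerP 0 (a - 5 * p / 2 * r - p / 2 * r^+2)) => hE.
    rewrite ger0_norm //; exact: c1a.
  rewrite ltr0_norm // /a; have e1 := @c1b _ _ _ _ hp1 hp3 hr0 hr1 hu1 hu2; lra.
have C2 := @c2 _ _ _ _ hp1 hp3 hr0 hr1 ha1 ha2.
have key : 4 * u * (n1 - A0 + 2 * B0) <= q * (n1 + A0).
  rewrite -subr_ge0.
  case: (lerP 0 (q - 4 * u)) => hs.
    have e1 : 0 <= (n1 - A0) * (q - 4 * u) by apply: mulr_ge0; lra.
    have e2 : 0 <= A0 * (q - 2 * (5 * p / 2) * (a - p / 2 * r^+2)) by apply: mulr_ge0; lra.
    have -> : q * (n1 + A0) - 4 * u * (n1 - A0 + 2 * B0) = (n1 - A0) * (q - 4 * u)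
       + 2 * (A0 * (q - 2 * (5 * p / 2) * (a - p / 2 * r^+2)))
       + 4 * ((u - 2 * r) * (5 * p / 2) * (a - p / 2 * r^+2) - 2 * u * B0) by rewrite /A0; ring.
    by apply: addr_ge0; [apply: addr_ge0|]; [ |apply: mulr_ge0| apply: mulr_ge0].
  have e1 : 0 <= (u + 2 * r - n1) * (4 * u - q) by apply: mulr_ge0; lra.
  have e2 : 0 <= 2 * u * (q - 2 * (5 * p / 2) * (a - p / 2 * r^+2)) by apply: mulr_ge0; lra.
  have e3 : 0 <= 2 * u * (5 * p * (a - p / 2 * r ^+ 2) - (8 * r + 4 * B0)) by apply: mulr_ge0; rewrite /B0 /E; lra.
  have -> : q * (n1 + A0) - 4 * u * (n1 - A0 + 2 * B0) = (u + 2 * r - n1) * (4 * u - q)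
     + 2 * u * (q - 2 * (5 * p / 2) * (a - p / 2 * r^+2))
     + 2 * u * (5 * p * (a - p / 2 * r ^+ 2) - (8 * r + 4 * B0)) by rewrite /A0; field.
  by apply: addr_ge0; [apply: addr_ge0|].
have hD : 0 <= n1 - A0 by lra.
have eD : (n1 - A0) * (n1 + A0) = 4 * u * (x + r).
  have -> : (n1 - A0) * (n1 + A0) = n1^+2 - A0^+2 by ring.
  by rewrite en1 /A0; ring.
have eQ : n2^+2 - B0^+2 = (x + r) * q by rewrite eB0 en2 /q /E /a; ring.
have k1 : 0 <= (x + r) * (q * (n1 + A0) - 4 * u * (n1 - A0 + 2 * B0)).
  by apply: mulr_ge0; lra.
have k2 : 0 <= (n1 + A0) * ((x + r) * q - (n1 - A0) * (n1 - A0 + 2 * B0)).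
  have -> : (n1 + A0) * ((x + r) * q - (n1 - A0) * (n1 - A0 + 2 * B0))
    = (x + r) * (q * (n1 + A0) - 4 * u * (n1 - A0 + 2 * B0))
      + (4 * u * (x + r) - (n1 - A0) * (n1 + A0)) * (n1 - A0 + 2 * B0) by ring.
  by rewrite eD subrr mul0r addr0.
have k3 : 0 <= (x + r) * q - (n1 - A0) * (n1 - A0 + 2 * B0).
  by rewrite -(pmulr_rge0 _ (_ : 0 < n1 + A0)) //; lra.
have k4 : (B0 + (n1 - A0))^+2 <= n2^+2.
  have -> : (B0 + (n1 - A0))^+2 = B0^+2 + (n1 - A0) * (n1 - A0 + 2 * B0) by ring.
  lra.
have k5 : B0 + (n1 - A0) <= n2.
  by rewrite -(@ler_pXn2r _ 2) // ?nnegrE; lra.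
lra.
Qed.


Lemma valMk (C : numClosedFieldType) (x : C) (h : x \is Num.real) : val (MkRC x h) = x.
Proof. by []. Qed.
Lemma valMk' (C : numClosedFieldType) (x : C) (h : x \is Num.real) : rcval (MkRC x h) = x.
Proof. by []. Qed.
Ltac vsimpl := rewrite ?(rmorphD, rmorphB, rmorphM, rmorphN, rmorphXn, fmorph_div, fmorphV, rmorph_nat, rmorph0, rmorph1, valMk, valMk').

Theorem lemma8 (C : numClosedFieldType) (p : C)
  (hp1 : 4 / 3 <= p) (hp2 : p <= sqrtC 2) (z : C) (hz : `|z| <= 1) :
  F8 p z <= F8 p (- `|z|).
Proof.
have h43 : (0 : C) <= 4 / 3 by rewrite divr_ge0 // ler0n.
have p0 : 0 <= p by apply: le_trans hp1.
have pR : p \is Num.real := ger0_real p0.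
have s2R : sqrtC 2 \is Num.real := sqrtC_real (ler0n C 2).
set r := `|z|.
set x := 'Re z.
set y := 'Im z.
have rR : r \is Num.real := normr_real z.
have xR : x \is Num.real := Creal_Re z.
have yR : y \is Num.real := Creal_Im z.
have er : r ^+ 2 = z * z^* := normCK z.
have exy : r ^+ 2 = x ^+ 2 + y ^+ 2 := normC2_Re_Im z.
have hzc : z^* = 2 * x - z.
  by rewrite /x ReE; field; rewrite ?pnatr_eq0.
pose P := MkRC p pR.
pose S := MkRC (sqrtC 2) s2R.
pose X := MkRC x xR.
pose Y := MkRC y yR.
pose Rr := MkRC r rR.
pose U : RC C := 6 * P ^+ 2 / (4 - P ^+ 2).
pose N1 := MkRC _ (normr_real (u8 p + v8 C * z)).
pose N2 := MkRC _ (normr_real (a8 p + b8 p * z - c8 p * z ^+ 2)).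
have HP1 : 4 / 3 <= P by rewrite leRC; vsimpl.
have HS0 : 0 <= S by rewrite leRC /= sqrtC_ge0 ler0n.
have HS2 : S ^+ 2 = 2.
  apply: val_inj; vsimpl; try (by rewrite -expr2 sqrtCK); done.
have HPS : P <= S by rewrite leRC.
have HP2 : P ^+ 2 <= 2 by nra.
have HR0 : 0 <= Rr by rewrite leRC /= normr_ge0.
have HR1 : Rr <= 1 by rewrite leRC; vsimpl.
have HXY : Rr ^+ 2 = X ^+ 2 + Y ^+ 2 by apply: val_inj; vsimpl.
have HX1 : - Rr <= X by nra.
have HX2 : X <= Rr by nra.
have Hd : 4 - P ^+ 2 != 0 by apply/lt0r_neq0; lra.
have HU : U * (4 - P ^+ 2) = 6 * P ^+ 2 by rewrite /U; field.
have HN1 : 0 <= N1 by rewrite leRC /= normr_ge0.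
have HN2 : 0 <= N2 by rewrite leRC /= normr_ge0.
have dC : (4 : C) - p ^+ 2 != 0.
  by have := Hd; apply: contraNneq => h; apply/eqP/val_inj; vsimpl.
have vU : val U = u8 p by [].
have uR : u8 p \is Num.real by rewrite -vU; exact: (valP U).
have ea : a8 p = p * u8 p / 2 by rewrite /a8 /u8; field; rewrite ?pnatr_eq0.
have two : (2 : C)^-1 \is Num.real by rewrite realV realn.
have aR : a8 p \is Num.real by rewrite ea; apply: realM => //; apply: realM.
have bR : b8 p \is Num.real by rewrite /b8; apply: realM => //; apply: realM => //; apply: realn.
have cR : c8 p \is Num.real by rewrite /c8; apply: realM.
have cD : forall a b : C, (a + b)^* = a^* + b^* by move=> a b; exact: rmorphD.
have cB : forall a b : C, (a - b)^* = a^* - b^* by move=> a b; exact: rmorphB.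
have cM : forall a b : C, (a * b)^* = a^* * b^* by move=> a b; exact: rmorphM.
have cX : forall (a : C) n, (a ^+ n)^* = a^* ^+ n by move=> a n; exact: rmorphXn.
have hC1 : `|u8 p + v8 C * z| ^+ 2 = u8 p ^+ 2 + 4 * u8 p * x + 4 * r ^+ 2.
  rewrite normCK er cD cM (conj_Creal uR) /v8 (conj_Creal (realn C 2)) hzc; ring.
have EN1 : N1 ^+ 2 = U ^+ 2 + 4 * U * X + 4 * Rr ^+ 2.
  by apply: val_inj; exact: hC1.
have hC2 : `|a8 p + b8 p * z - c8 p * z ^+ 2| ^+ 2 =
     (p * u8 p / 2 + p / 2 * r ^+ 2) ^+ 2 + (5 * p / 2) ^+ 2 * r ^+ 2
         + 2 * (5 * p / 2) * (p * u8 p / 2 - p / 2 * r ^+ 2) * x - 4 * (p * u8 p / 2) * (p / 2) * x ^+ 2.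
  rewrite normCK er cB cD (conj_Creal aR) cM (conj_Creal bR) cM (conj_Creal cR) cX hzc.
  rewrite ea /b8 /c8; ring.
have EN2 : N2 ^+ 2 = (P * U / 2 + P / 2 * Rr ^+ 2) ^+ 2 + (5 * P / 2) ^+ 2 * Rr ^+ 2
         + 2 * (5 * P / 2) * (P * U / 2 - P / 2 * Rr ^+ 2) * X - 4 * (P * U / 2) * (P / 2) * X ^+ 2.
  by apply: val_inj; exact: hC2.
have K := @core (RC C) P Rr X U N1 N2 HP1 HP2 HR0 HR1 HX1 HX2 HU HN1 EN1 HN2 EN2.
have KC : `|u8 p + v8 C * z| - `|a8 p + b8 p * z - c8 p * z ^+ 2|
   <= (u8 p - 2 * r) - `|p * u8 p / 2 - 5 * p / 2 * r - p / 2 * r ^+ 2| := K.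
rewrite /F8; apply: (le_trans KC).
apply: lerB.
  rewrite /v8 -/r.
  have -> : u8 p + 2 * - r = u8 p - 2 * r by rewrite mulrN.
  apply: real_ler_norm; apply: realB => //; apply: realM => //; apply: realn.
rewrite le_eqVlt; apply/orP; left; apply/eqP; congr `|_|.
rewrite ea /b8 /c8 -/r; field; by rewrite ?pnatr_eq0.
Qed.
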